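(* Let $\lambda_0,\dots,\lambda_n\in\mathbb{C}$, $n\ge1$, and $a\neq b$ real, and suppose $E_{(\lambda_0,\dots,\lambda_n)}$ and $E_{(\lambda_0,\dots,\lambda_{n-1})}$ are extended Chebyshev systems for $\{a,b\}$. For $k=0,\dots,n-1$ the limit $$d_k:=\lim_{x\to b}\frac{\frac{d}{dx}p_{(\lambda_0,\dots,\lambda_n),k}(x)}{p_{(\lambda_0,\dots,\lambda_{n-1}),k}(x)}$$ exists and is nonzero, and $$\Big(\frac{d}{dx}-\lambda_n\Big)p_{(\lambda_0,\dots,\lambda_n),k}=p_{(\lambda_0,\dots,\lambda_{n-1}),k-1}+d_k\,p_{(\lambda_0,\dots,\lambda_{n-1}),k}\quad\text{for }k=1,\dots,n-1,$$ while $(\frac{d}{dx}-\lambda_n)p_{(\lambda_0,\dots,\lambda_n),0}=d_0\,p_{(\lambda_0,\dots,\lambda_{n-1}),0}$ and $(\frac{d}{dx}-\lambda_n)p_{(\lambda_0,\dots,\lambda_n),n}=p_{(\lambda_0,\dots,\lambda_{n-1}),n-1}$.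
   Context: $E_{(\lambda_0,\dots,\lambda_m)}$ denotes the space of all $f\in C^\infty(\mathbb{R},\mathbb{C})$ with $(\frac{d}{dx}-\lambda_0)\cdots(\frac{d}{dx}-\lambda_m)f=0$ (dimension $m+1$). A zero of order (exactly) $k$ at $a$ means $f(a)=\dots=f^{(k-1)}(a)=0$, $f^{(k)}(a)\neq0$. $E_{(\lambda_0,\dots,\lambda_m)}$ is an extended Chebyshev system for $A\subset\mathbb{R}$ if every nonzero element has at most $m$ zeros in $A$ counted with multiplicity. In that case, for $A=\{a,b\}$, $a\ne b$, the Bernstein basis $p_{(\lambda_0,\dots,\lambda_m),k}$, $k=0,\dots,m$, is the unique family in $E_{(\lambda_0,\dots,\lambda_m)}$ with $p_{(\lambda_0,\dots,\lambda_m),k}$ having a zero of order exactly $k$ at $a$ and exactly $m-k$ at $b$, and $p^{(k)}_{(\lambda_0,\dots,\lambda_m),k}(a)=1$. *)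

(* Defs.v *)
From Stdlib Require Export Reals.
Open Scope R_scope.

Definition Cx : Type := (R * R)%type.
Definition C0 : Cx := (0, 0).
Definition C1 : Cx := (1, 0).
Definition Cadd (z w : Cx) : Cx := (fst z + fst w, snd z + snd w).
Definition Copp (z : Cx) : Cx := (- fst z, - snd z).
Definition Csub (z w : Cx) : Cx := Cadd z (Copp w).
Definition Cmul (z w : Cx) : Cx :=
  (fst z * fst w - snd z * snd w, fst z * snd w + snd z * fst w).
Definition Cnorm2 (z : Cx) : R := fst z * fst z + snd z * snd z.
Definition Cinv (z : Cx) : Cx := (fst z / Cnorm2 z, - snd z / Cnorm2 z).
Definition Cdiv (z w : Cx) : Cx := Cmul z (Cinv w).
Definition Cnorm (z : Cx) : R := sqrt (Cnorm2 z).

Definition is_deriv (f g : R -> Cx) : Prop :=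
  forall x, derivable_pt_lim (fun t => fst (f t)) x (fst (g x)) /\
            derivable_pt_lim (fun t => snd (f t)) x (snd (g x)).

Definition derseq (f : R -> Cx) (F : nat -> R -> Cx) : Prop :=
  (forall x, F 0%nat x = f x) /\ forall j, is_deriv (F j) (F (S j)).

Definition smooth (f : R -> Cx) : Prop := exists F, derseq f F.

(** ann lam m f : (d/dx - lam 0) ... (d/dx - lam m) f = 0,
    the rightmost factor (d/dx - lam m) being applied first. *)
Fixpoint ann (lam : nat -> Cx) (m : nat) (f : R -> Cx) : Prop :=
  match m with
  | O => exists g, is_deriv f g /\ forall x, Csub (g x) (Cmul (lam 0%nat) (f x)) = C0
  | S m' => exists g, is_deriv f g /\
              ann lam m' (fun x => Csub (g x) (Cmul (lam (S m')) (f x)))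
  end.

Definition inE (lam : nat -> Cx) (m : nat) (f : R -> Cx) : Prop :=
  smooth f /\ ann lam m f.

Definition vanishes_to (f : R -> Cx) (a : R) (k : nat) : Prop :=
  exists F, derseq f F /\ forall j, (j < k)%nat -> F j a = C0.

Definition zero_order (f : R -> Cx) (a : R) (k : nat) : Prop :=
  exists F, derseq f F /\ (forall j, (j < k)%nat -> F j a = C0) /\ F k a <> C0.

Definition deriv_at (f : R -> Cx) (k : nat) (a : R) (v : Cx) : Prop :=
  exists F, derseq f F /\ F k a = v.

(** E_(lam 0..lam m) is an extended Chebyshev system for {a, b}:
    every nonzero element has at most m zeros in {a,b} counted with multiplicity. *)
Definition ECT_ab (lam : nat -> Cx) (m : nat) (a b : R) : Prop :=
  forall f, inE lam m f -> (exists x, f x <> C0) ->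
    forall i j, vanishes_to f a i -> vanishes_to f b j -> (i + j <= m)%nat.

Definition bernstein_basis (lam : nat -> Cx) (m : nat) (a b : R)
    (p : nat -> R -> Cx) : Prop :=
  forall k, (k <= m)%nat ->
    inE lam m (p k) /\ zero_order (p k) a k /\ zero_order (p k) b (m - k) /\
    deriv_at (p k) k a C1.

Definition Clim (h : R -> Cx) (b : R) (l : Cx) : Prop :=
  forall eps, 0 < eps -> exists delta, 0 < delta /\
    forall x, x <> b -> Rabs (x - b) < delta -> Cnorm (Csub (h x) l) < eps.

(* Main.v *)
Require Import Defs.
From Stdlib Require Import Reals Lra Lia Arith Factorial FunctionalExtensionality Classical ClassicalEpsilon.
Open Scope R_scope.

Definition lin (f : R -> Cx) (c : Cx) (g : R -> Cx) : R -> Cx :=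
  fun x => Cadd (f x) (Cmul c (g x)).

Ltac cunf := unfold lin, Csub, Cdiv, Cnorm in *; unfold Cadd, Cmul, Copp, Csub, C0, Defs.C1, Cdiv, Cinv, Cnorm2 in *; simpl in *.

Lemma dscal_l f c y l : derivable_pt_lim f y l -> derivable_pt_lim (fun t => c * f t) y (c * l).
Proof. intros H. apply (derivable_pt_lim_scal f c). exact H. Qed.

Lemma is_deriv_lin f f' c g g' : is_deriv f f' -> is_deriv g g' ->
  is_deriv (lin f c g) (lin f' c g').
Proof.
  intros Hf Hg x. destruct (Hf x) as [Hf1 Hf2]. destruct (Hg x) as [Hg1 Hg2].
  unfold lin, Cadd, Cmul; simpl. split.
  - apply derivable_pt_lim_plus; auto. apply derivable_pt_lim_minus; apply dscal_l; auto.
  - apply derivable_pt_lim_plus; auto. apply derivable_pt_lim_plus; apply dscal_l; auto.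
Qed.

Lemma derseq_lin f F c g G : derseq f F -> derseq g G ->
  derseq (lin f c g) (fun j => lin (F j) c (G j)).
Proof.
  intros [HF0 HF] [HG0 HG]. split.
  - intros x. unfold lin. rewrite HF0, HG0. reflexivity.
  - intros j. apply is_deriv_lin; auto.
Qed.

Lemma is_deriv_unique f g1 g2 : is_deriv f g1 -> is_deriv f g2 -> forall x, g1 x = g2 x.
Proof.
  intros H1 H2 x. destruct (H1 x) as [A1 B1]. destruct (H2 x) as [A2 B2].
  rewrite (surjective_pairing (g1 x)), (surjective_pairing (g2 x)).
  f_equal; eapply uniqueness_limite; eauto.
Qed.

Lemma derseq_unique f F G : derseq f F -> derseq f G -> forall j x, F j x = G j x.
Proof.
  intros [HF0 HF] [HG0 HG] j. induction j as [|j IH]; intros x.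
  - rewrite HF0, HG0; auto.
  - assert (E : F j = G j) by (apply functional_extensionality; auto).
    apply (is_deriv_unique (F j)); auto. rewrite E; auto.
Qed.

Lemma ann_lin lam m : forall f g c, ann lam m f -> ann lam m g -> ann lam m (lin f c g).
Proof.
  induction m as [|m IH]; intros f g c Hf Hg.
  - destruct Hf as [f' [Hf1 Hf2]]. destruct Hg as [g' [Hg1 Hg2]].
    exists (lin f' c g'). split. apply is_deriv_lin; auto.
    intros x. specialize (Hf2 x). specialize (Hg2 x).
    assert (E : Csub (lin f' c g' x) (Cmul (lam 0%nat) (lin f c g x)) =
      Cadd (Csub (f' x) (Cmul (lam 0%nat) (f x))) (Cmul c (Csub (g' x) (Cmul (lam 0%nat) (g x))))).
    { cunf. f_equal; ring. }
    rewrite E, Hf2, Hg2. cunf. f_equal; ring.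
  - destruct Hf as [f' [Hf1 Hf2]]. destruct Hg as [g' [Hg1 Hg2]].
    exists (lin f' c g'). split. apply is_deriv_lin; auto.
    replace (fun x => Csub (lin f' c g' x) (Cmul (lam (S m)) (lin f c g x)))
      with (lin (fun x => Csub (f' x) (Cmul (lam (S m)) (f x))) c
                (fun x => Csub (g' x) (Cmul (lam (S m)) (g x)))).
    + apply IH; auto.
    + apply functional_extensionality; intros x. cunf. f_equal; ring.
Qed.

Lemma inE_lin lam m f c g : inE lam m f -> inE lam m g -> inE lam m (lin f c g).
Proof.
  intros [[F HF] Hf] [[G HG] Hg]. split.
  - exists (fun j => lin (F j) c (G j)). apply derseq_lin; auto.
  - apply ann_lin; auto.
Qed.

Lemma ECT_zero lam m a b f i j : ECT_ab lam m a b -> inE lam m f ->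
  vanishes_to f a i -> vanishes_to f b j -> (m < i + j)%nat -> forall x, f x = C0.
Proof.
  intros HE Hf Ha Hb Hlt x. apply NNPP. intros Hx.
  assert (i + j <= m)%nat by (apply (HE f Hf (ex_intro _ x Hx)); auto). lia.
Qed.

Lemma van_F f F a k : derseq f F -> vanishes_to f a k -> forall j, (j < k)%nat -> F j a = C0.
Proof.
  intros HF [G [HG HG2]] j Hj. rewrite (derseq_unique f F G HF HG). auto.
Qed.

Lemma zo_F f F a k : derseq f F -> zero_order f a k ->
  (forall j, (j < k)%nat -> F j a = C0) /\ F k a <> C0.
Proof.
  intros HF [G [HG [HG2 HG3]]]. split.
  - intros j Hj. rewrite (derseq_unique f F G HF HG). auto.
  - rewrite (derseq_unique f F G HF HG). auto.
Qed.

Lemma da_F f F k a v : derseq f F -> deriv_at f k a v -> F k a = v.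
Proof.
  intros HF [G [HG HG2]]. rewrite (derseq_unique f F G HF HG). auto.
Qed.

Lemma Cnorm2_nz z : z <> C0 -> Cnorm2 z <> 0.
Proof.
  intros Hz H. apply Hz. destruct z as [z1 z2]. unfold Cnorm2 in H; simpl in H.
  unfold C0. f_equal; nra.
Qed.

Lemma Cdiv_mul e c : c <> C0 -> Cmul (Cdiv e c) c = e.
Proof.
  intros Hc. pose proof (Cnorm2_nz c Hc) as N. destruct c as [c1 c2], e as [e1 e2].
  cunf. f_equal; field; auto.
Qed.

Lemma Cdiv_nz e c : e <> C0 -> c <> C0 -> Cdiv e c <> C0.
Proof.
  intros He Hc H. apply He. rewrite <- (Cdiv_mul e c Hc), H. cunf. f_equal; ring.
Qed.

Lemma rolle' f f' a c : a <> c -> (forall y, derivable_pt_lim f y (f' y)) -> f a = f c ->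
  exists eta, f' eta = 0 /\ Rabs (eta - a) < Rabs (c - a) /\ eta <> a.
Proof.
  intros Hac HD Hf.
  destruct (Rlt_or_le a c) as [H|H].
  - destruct (MVT_cor2 f f' a c H (fun y _ => HD y)) as [e [He1 He2]].
    exists e. rewrite Hf, Rminus_diag in He1.
    split. { symmetry in He1. apply Rmult_integral in He1. destruct He1 as [?|?]; [auto|lra]. }
    rewrite !Rabs_right by lra. split; lra.
  - assert (H' : c < a) by (destruct H; [auto|congruence]).
    destruct (MVT_cor2 f f' c a H' (fun y _ => HD y)) as [e [He1 He2]].
    exists e. rewrite Hf, Rminus_diag in He1.
    split. { symmetry in He1. apply Rmult_integral in He1. destruct He1 as [?|?]; [auto|lra]. }
    rewrite !Rabs_left by lra. split; lra.
Qed.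

Lemma dscal f c y l : derivable_pt_lim f y l -> derivable_pt_lim (fun t => f t * c) y (l * c).
Proof.
  intros H. replace (fun t => f t * c) with (mult_real_fct c f).
  - rewrite Rmult_comm. apply derivable_pt_lim_scal. exact H.
  - apply functional_extensionality. intros t. unfold mult_real_fct. ring.
Qed.

Lemma dpow b m y : derivable_pt_lim (fun y => (y - b) ^ (S m)) y (INR (S m) * (y - b) ^ m).
Proof.
  assert (H1 : derivable_pt_lim (fun y => y - b) y 1).
  { replace 1 with (1 - 0) by ring. apply derivable_pt_lim_minus.
    apply derivable_pt_lim_id. apply derivable_pt_lim_const. }
  pose proof (derivable_pt_lim_comp (fun y => y - b) (fun z => z ^ (S m)) y 1 _ H1
     (derivable_pt_lim_pow (y - b) (S m))) as H.
  simpl pred in H. rewrite Rmult_1_r in H. exact H.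
Qed.

Lemma taylor (m : nat) : forall (F : nat -> R -> R) b x,
  (forall j y, derivable_pt_lim (F j) y (F (S j) y)) ->
  (forall j, (j < m)%nat -> F j b = 0) ->
  exists xi, Rabs (xi - b) <= Rabs (x - b) /\
    F 0%nat x * INR (fact m) = F m xi * (x - b) ^ m.
Proof.
  induction m as [|m IH]; intros F b x HD HZ.
  - exists x. split; [lra|]. simpl. ring.
  - destruct (Req_dec x b) as [Hxb|Hxb].
    + subst. exists b. split; [lra|]. rewrite (HZ 0%nat) by lia.
      rewrite Rminus_diag, pow_i by lia. ring.
    + set (G := fun y => (y - b) ^ (S m)).
      destruct (rolle' (fun y => F 0%nat y * G x - G y * F 0%nat x)
        (fun y => F 1%nat y * G x - (INR (S m) * (y - b) ^ m) * F 0%nat x) b x)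
        as [eta [He1 [He2 He3]]].
      * auto.
      * intros y. apply derivable_pt_lim_minus.
        -- apply dscal. apply HD.
        -- apply dscal. apply dpow.
      * unfold G. rewrite (HZ 0%nat) by lia. rewrite Rminus_diag, pow_i by lia. ring.
      * destruct (IH (fun j => F (S j)) b eta) as [xi [Hx1 Hx2]].
        { intros; apply HD. }
        { intros j Hj. apply HZ. lia. }
        exists xi. split; [lra|].
        assert (HE : (eta - b) ^ m <> 0) by (apply pow_nonzero; lra).
        apply (Rmult_eq_reg_r ((eta - b) ^ m)); auto.
        change (fact (S m)) with (S m * fact m)%nat. rewrite mult_INR.
        assert (H1 : F 1%nat eta * G x = INR (S m) * (eta - b) ^ m * F 0%nat x) by lra.
        simpl in Hx2.
        replace (F 0%nat x * (INR (S m) * INR (fact m)) * (eta - b) ^ m)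
          with (INR (fact m) * (INR (S m) * (eta - b) ^ m * F 0%nat x)) by ring.
        rewrite <- H1.
        replace (INR (fact m) * (F 1%nat eta * G x)) with (G x * (F 1%nat eta * INR (fact m))) by ring.
        rewrite Hx2. unfold G. ring.
Qed.

Lemma cont_of_deriv f b l : derivable_pt_lim f b l -> forall e, 0 < e ->
  exists del, 0 < del /\ forall y, Rabs (y - b) < del -> Rabs (f y - f b) < e.
Proof.
  intros H e He.
  pose proof (derivable_continuous_pt f b (exist _ l H)) as Hc.
  unfold continuity_pt, continue_in, limit1_in, limit_in in Hc.
  destruct (Hc e He) as [alp [Ha Hy]]. exists alp. split; auto.
  intros y Hyb. destruct (Req_dec y b) as [->|Hn].
  - rewrite Rminus_diag, Rabs_R0; lra.
  - apply Hy. split. unfold D_x, no_cond. split; auto. simpl. unfold R_dist. auto.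
Qed.

Lemma key_alg t z1 z2 w1 w2 d : t <> 0 -> w1 * w1 + w2 * w2 <> 0 ->
  Cnorm (Csub (Cdiv (Cadd (t * z1, t * z2) (Cmul d (t * w1, t * w2))) (t * w1, t * w2)) d)
  = sqrt ((z1 * z1 + z2 * z2) / (w1 * w1 + w2 * w2)).
Proof.
  intros Ht Hw. destruct d as [d1 d2]. unfold Cnorm. f_equal. cunf.
  field. split; auto.
  replace (t * w1 * (t * w1) + t * w2 * (t * w2)) with ((t*t) * (w1 * w1 + w2 * w2)) by ring.
  apply Rmult_integral_contrapositive_currified; auto. 
Qed.

Lemma eq_scaled (a z P M : R) : M <> 0 -> a * M = z * P -> a = (P / M) * z.
Proof. intros HM H. apply (Rmult_eq_reg_r M); auto. rewrite H. field. auto. Qed.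

Lemma sq_lt e z : - e < z -> z < e -> z * z < e * e.
Proof. intros H1 H2. assert (0 < (e - z) * (e + z)) by (apply Rmult_lt_0_compat; lra).
  replace (e * e) with ((e - z) * (e + z) + z * z) by ring. lra. Qed.

Lemma lim_ratio m u U v V g d b :
  derseq u U -> derseq v V -> (forall j, (j <= m)%nat -> U j b = C0) ->
  (forall j, (j < m)%nat -> V j b = C0) -> V m b <> C0 ->
  (forall x, g x = Cadd (u x) (Cmul d (v x))) ->
  Clim (fun x => Cdiv (g x) (v x)) b d.
Proof.
  intros HU HV HUz HVz Hc Hg eps Heps.
  destruct HU as [HU0 HUd]. destruct HV as [HV0 HVd].
  pose proof (Cnorm2_nz _ Hc) as HC.
  remember (V m b) as c eqn:Ec.
  destruct c as [c1 c2]. unfold Cnorm2 in HC; simpl in HC.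
  set (C := c1 * c1 + c2 * c2) in *.
  assert (HCp : 0 < C) by (unfold C in *; nra).
  assert (Hee : 0 < eps * eps) by nra.
  set (eta := Rmin 1 (Rmin (C/8) (eps*eps*C/16))).
  assert (Heta : 0 < eta).
  { unfold eta. apply Rmin_glb_lt; [lra|]. apply Rmin_glb_lt; [lra|].
    assert (0 < eps * eps * C) by nra. lra. }
  assert (He1 : eta <= 1) by apply Rmin_l.
  assert (He2 : eta <= C/8) by (eapply Rle_trans; [apply Rmin_r|apply Rmin_l]).
  assert (He3 : eta <= eps*eps*C/16) by (eapply Rle_trans; [apply Rmin_r|apply Rmin_r]).
  destruct (cont_of_deriv (fun t => fst (U m t)) b _ (proj1 (HUd m b)) eta Heta) as [d1 [Hd1 H1]].
  destruct (cont_of_deriv (fun t => snd (U m t)) b _ (proj2 (HUd m b)) eta Heta) as [d2 [Hd2 H2]].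
  destruct (cont_of_deriv (fun t => fst (V m t)) b _ (proj1 (HVd m b)) eta Heta) as [d3 [Hd3 H3]].
  destruct (cont_of_deriv (fun t => snd (V m t)) b _ (proj2 (HVd m b)) eta Heta) as [d4 [Hd4 H4]].
  exists (Rmin (Rmin d1 d2) (Rmin d3 d4)). split.
  { repeat apply Rmin_glb_lt; auto. }
  intros x Hxb Hxd.
  assert (Hx1 : Rabs (x - b) < d1) by (eapply Rlt_le_trans; [apply Hxd|]; eapply Rle_trans; [apply Rmin_l|apply Rmin_l]).
  assert (Hx2 : Rabs (x - b) < d2) by (eapply Rlt_le_trans; [apply Hxd|]; eapply Rle_trans; [apply Rmin_l|apply Rmin_r]).
  assert (Hx3 : Rabs (x - b) < d3) by (eapply Rlt_le_trans; [apply Hxd|]; eapply Rle_trans; [apply Rmin_r|apply Rmin_l]).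
  assert (Hx4 : Rabs (x - b) < d4) by (eapply Rlt_le_trans; [apply Hxd|]; eapply Rle_trans; [apply Rmin_r|apply Rmin_r]).
  destruct (taylor m (fun j t => fst (U j t)) b x) as [xi1 [Hy1 Ht1]].
  { intros j y. exact (proj1 (HUd j y)). }
  { intros j Hj. simpl. rewrite HUz by lia. reflexivity. }
  destruct (taylor m (fun j t => snd (U j t)) b x) as [xi2 [Hy2 Ht2]].
  { intros j y. exact (proj2 (HUd j y)). }
  { intros j Hj. simpl. rewrite HUz by lia. reflexivity. }
  destruct (taylor m (fun j t => fst (V j t)) b x) as [xi3 [Hy3 Ht3]].
  { intros j y. exact (proj1 (HVd j y)). }
  { intros j Hj. simpl. rewrite HVz by lia. reflexivity. }
  destruct (taylor m (fun j t => snd (V j t)) b x) as [xi4 [Hy4 Ht4]].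
  { intros j y. exact (proj2 (HVd j y)). }
  { intros j Hj. simpl. rewrite HVz by lia. reflexivity. }
  simpl in Ht1, Ht2, Ht3, Ht4. rewrite HU0 in Ht1, Ht2. rewrite HV0 in Ht3, Ht4.
  specialize (H1 xi1 ltac:(lra)). specialize (H2 xi2 ltac:(lra)).
  specialize (H3 xi3 ltac:(lra)). specialize (H4 xi4 ltac:(lra)).
  simpl in H1, H2, H3, H4.
  rewrite (HUz m (le_n m)) in H1, H2. rewrite <- Ec in H3, H4. simpl in H1, H2, H3, H4.
  set (z1 := fst (U m xi1)) in *. set (z2 := snd (U m xi2)) in *.
  set (w1 := fst (V m xi3)) in *. set (w2 := snd (V m xi4)) in *.
  set (M := INR (fact m)) in *. set (P := (x - b) ^ m) in *.
  assert (HM : M <> 0) by apply INR_fact_neq_0.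
  assert (HP : P <> 0) by (apply pow_nonzero; lra).
  assert (Ht : P / M <> 0) by (unfold Rdiv; apply Rmult_integral_contrapositive_currified; auto; apply Rinv_neq_0_compat; auto).
  assert (Eu : u x = (P / M * z1, P / M * z2)).
  { rewrite (surjective_pairing (u x)). f_equal; apply eq_scaled; auto. }
  assert (Ev : v x = (P / M * w1, P / M * w2)).
  { rewrite (surjective_pairing (v x)). f_equal; apply eq_scaled; auto. }
  apply Rabs_def2 in H1, H2, H3, H4.
  assert (Ew : C / 4 <= w1 * w1 + w2 * w2).
  { assert ((c1 - w1) * (c1 - w1) < eta * eta) by (apply sq_lt; lra).
    assert ((c2 - w2) * (c2 - w2) < eta * eta) by (apply sq_lt; lra).
    assert (eta * eta <= eta * 1) by (apply Rmult_le_compat_l; lra).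
    pose proof (Rle_0_sqr (c1 - 2 * w1)). pose proof (Rle_0_sqr (c2 - 2 * w2)).
    unfold Rsqr in *.
    assert (E : C = 2 * (w1 * w1 + w2 * w2) + 2 * ((c1 - w1) * (c1 - w1)) + 2 * ((c2 - w2) * (c2 - w2))
       - (c1 - 2 * w1) * (c1 - 2 * w1) - (c2 - 2 * w2) * (c2 - 2 * w2)) by (unfold C; ring).
    lra. }
  assert (HNw : w1 * w1 + w2 * w2 <> 0) by lra.
  rewrite Hg, Eu, Ev, key_alg by auto.
  rewrite <- (sqrt_Rsqr eps) by lra. unfold Rsqr.
  apply sqrt_lt_1.
  - apply Rmult_le_pos. pose proof (Rle_0_sqr z1); pose proof (Rle_0_sqr z2); unfold Rsqr in *; lra.
    left. apply Rinv_0_lt_compat. lra.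
  - lra.
  - unfold Rdiv. apply (Rmult_lt_reg_r (w1 * w1 + w2 * w2)). lra.
    rewrite Rmult_assoc, Rinv_l by auto. rewrite Rmult_1_r.
    assert (z1 * z1 < eta * eta) by (apply sq_lt; lra).
    assert (z2 * z2 < eta * eta) by (apply sq_lt; lra).
    assert (eta * eta <= eta * 1) by (apply Rmult_le_compat_l; lra).
    assert (eps * eps * (C / 4) <= eps * eps * (w1 * w1 + w2 * w2)) by (apply Rmult_le_compat_l; lra).
    assert (0 < eps * eps * C) by (apply Rmult_lt_0_compat; lra).
    lra.
Qed.

Lemma derseq_shift f F g : derseq f F -> is_deriv f g -> derseq g (fun j => F (S j)).
Proof.
  intros [HF0 HF] Hg. split.
  - intros x. apply (is_deriv_unique f); auto.
    replace f with (F 0%nat) by (apply functional_extensionality; auto). apply HF.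
  - intros j. apply HF.
Qed.

Lemma h_facts lam n' pk P g : inE lam (S n') pk -> derseq pk P -> is_deriv pk g ->
  inE lam n' (lin g (Copp (lam (S n'))) pk) /\
  derseq (lin g (Copp (lam (S n'))) pk) (fun j => lin (P (S j)) (Copp (lam (S n'))) (P j)).
Proof.
  intros [_ Hann] HP Hg.
  assert (HD : derseq (lin g (Copp (lam (S n'))) pk) (fun j => lin (P (S j)) (Copp (lam (S n'))) (P j))).
  { apply derseq_lin; auto. eapply derseq_shift; eauto. }
  split; auto. split. eexists; eauto.
  destruct Hann as [g0 [Hg0 Hann]].
  replace (lin g (Copp (lam (S n'))) pk) with (fun x => Csub (g0 x) (Cmul (lam (S n')) (pk x))); auto.
  apply functional_extensionality. intros x. rewrite (is_deriv_unique pk g0 g Hg0 Hg x).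
  cunf. f_equal; ring.
Qed.

Lemma lin_cancel e d c : Cmul d c = e -> Cadd e (Cmul (Copp d) c) = C0.
Proof. intros <-. cunf. f_equal; ring. Qed.

Lemma lin_cancel3 e d c l k : Cmul d c = e ->
  Cadd (Cadd (Cadd e (Cmul l C0)) (Cmul k C0)) (Cmul (Copp d) c) = C0.
Proof. intros <-. cunf. f_equal; ring. Qed.

Lemma lin_cancel2 e d c l : Cmul d c = e ->
  Cadd (Cadd e (Cmul l C0)) (Cmul (Copp d) c) = C0.
Proof. intros <-. cunf. f_equal; ring. Qed.

Lemma smooth_of f lam m : inE lam m f -> exists F, derseq f F.
Proof. intros [H _]. exact H. Qed.

Ltac cz := cunf; f_equal; ring.

Lemma perk lam n' a b p q k (HE' : ECT_ab lam n' a b)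
  (Hp : bernstein_basis lam (S n') a b p) (Hq : bernstein_basis lam n' a b q) :
  (k <= n')%nat -> exists dk, dk <> C0 /\
   (forall g, is_deriv (p k) g -> Clim (fun x => Cdiv (g x) (q k x)) b dk) /\
   ((1 <= k)%nat -> forall g, is_deriv (p k) g -> forall x,
      Csub (g x) (Cmul (lam (S n')) (p k x)) = Cadd (q (k-1)%nat x) (Cmul dk (q k x))) /\
   (k = 0%nat -> forall g, is_deriv (p k) g -> forall x,
      Csub (g x) (Cmul (lam (S n')) (p k x)) = Cmul dk (q k x)).
Proof.
  intros Hk.
  destruct (Hp k ltac:(lia)) as [HpE [HpA [HpB HpD]]].
  destruct (Hq k Hk) as [HqE [HqA [HqB HqD]]].
  destruct (smooth_of _ _ _ HpE) as [P HP].
  destruct (smooth_of _ _ _ HqE) as [Q HQ].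
  set (m := (n' - k)%nat).
  replace (S n' - k)%nat with (S m) in HpB by (unfold m; lia).
  destruct (zo_F _ _ _ _ HP HpA) as [PA PAk].
  destruct (zo_F _ _ _ _ HP HpB) as [PB PBm].
  destruct (zo_F _ _ _ _ HQ HqA) as [QA QAk].
  destruct (zo_F _ _ _ _ HQ HqB) as [QB QBm].
  pose proof (da_F _ _ _ _ _ HP HpD) as PD.
  pose proof (da_F _ _ _ _ _ HQ HqD) as QD.
  set (e := P (S m) b) in *. set (c := Q m b) in *.
  exists (Cdiv e c).
  assert (Hdc : Cmul (Cdiv e c) c = e) by (apply Cdiv_mul; auto).
  split; [apply Cdiv_nz; auto|].
  split.
  { intros g Hg.
    apply (lim_ratio m (lin g (Copp (Cdiv e c)) (q k)) (fun j => lin (P (S j)) (Copp (Cdiv e c)) (Q j))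
             (q k) Q g (Cdiv e c) b).
    - apply derseq_lin; auto. eapply derseq_shift; eauto.
    - auto.
    - intros j Hj. unfold lin. destruct (Nat.eq_dec j m) as [->|Hne].
      + apply lin_cancel. auto.
      + rewrite PB by lia. rewrite QB by lia. cz.
    - auto.
    - auto.
    - intros x. rewrite (surjective_pairing (g x)) at 1. cz. }
  split.
  - intros Hk1 g Hg x.
    destruct k as [|k']; [lia|]. replace (S k' - 1)%nat with k' by lia.
    destruct (Hq k' ltac:(lia)) as [Hq'E [Hq'A [Hq'B Hq'D]]].
    destruct (smooth_of _ _ _ Hq'E) as [Q' HQ'].
    replace (n' - k')%nat with (S m) in Hq'B by (unfold m; lia).
    destruct (zo_F _ _ _ _ HQ' Hq'A) as [Q'A _].
    destruct (zo_F _ _ _ _ HQ' Hq'B) as [Q'B _].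
    pose proof (da_F _ _ _ _ _ HQ' Hq'D) as Q'D.
    destruct (h_facts lam n' _ P g HpE HP Hg) as [HhE HhD].
    set (f := lin (lin (lin g (Copp (lam (S n'))) (p (S k'))) (Copp Defs.C1) (q k')) (Copp (Cdiv e c)) (q (S k'))).
    assert (Hf : f x = C0).
    { apply (ECT_zero lam n' a b f (S k') (S m) HE').
      - unfold f. apply inE_lin; auto. apply inE_lin; auto.
      - exists (fun j => lin (lin (lin (P (S j)) (Copp (lam (S n'))) (P j)) (Copp Defs.C1) (Q' j)) (Copp (Cdiv e c)) (Q j)).
        split. { unfold f. apply derseq_lin; auto. apply derseq_lin; auto. }
        intros j Hj. unfold lin. rewrite (QA j) by lia.
        destruct (Nat.eq_dec j k') as [->|Hne].
        + rewrite PD, Q'D, (PA k') by lia. cz.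
        + rewrite (PA j), (PA (S j)), (Q'A j) by lia. cz.
      - exists (fun j => lin (lin (lin (P (S j)) (Copp (lam (S n'))) (P j)) (Copp Defs.C1) (Q' j)) (Copp (Cdiv e c)) (Q j)).
        split. { unfold f. apply derseq_lin; auto. apply derseq_lin; auto. }
        intros j Hj. unfold lin. rewrite (Q'B j) by lia. rewrite (PB j) by lia.
        destruct (Nat.eq_dec j m) as [->|Hne].
        + apply lin_cancel3; auto.
        + rewrite (PB (S j)), (QB j) by lia. cz.
      - unfold m. lia. }
    unfold f in Hf. cunf. injection Hf as A B. f_equal; lra.
  - intros Hk0 g Hg x. subst k.
    destruct (h_facts lam n' _ P g HpE HP Hg) as [HhE HhD].
    set (f := lin (lin g (Copp (lam (S n'))) (p 0%nat)) (Copp (Cdiv e c)) (q 0%nat)).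
    assert (Hf : f x = C0).
    { apply (ECT_zero lam n' a b f 0 (S m) HE').
      - unfold f. apply inE_lin; auto.
      - exists (fun j => lin (lin (P (S j)) (Copp (lam (S n'))) (P j)) (Copp (Cdiv e c)) (Q j)).
        split. { unfold f. apply derseq_lin; auto. }
        intros j Hj. lia.
      - exists (fun j => lin (lin (P (S j)) (Copp (lam (S n'))) (P j)) (Copp (Cdiv e c)) (Q j)).
        split. { unfold f. apply derseq_lin; auto. }
        intros j Hj. unfold lin. rewrite (PB j) by lia.
        destruct (Nat.eq_dec j m) as [->|Hne].
        + apply lin_cancel2; auto.
        + rewrite (PB (S j)), (QB j) by lia. cz.
      - unfold m. lia. }
    unfold f in Hf. cunf. injection Hf as A B. f_equal; lra.
Qed.

Lemma lastk lam n' a b p q (HE' : ECT_ab lam n' a b)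
  (Hp : bernstein_basis lam (S n') a b p) (Hq : bernstein_basis lam n' a b q) :
  forall g, is_deriv (p (S n')) g -> forall x,
    Csub (g x) (Cmul (lam (S n')) (p (S n') x)) = q n' x.
Proof.
  intros g Hg x.
  destruct (Hp (S n') (le_n _)) as [HpE [HpA [_ HpD]]].
  destruct (Hq n' (le_n _)) as [HqE [HqA [_ HqD]]].
  destruct (smooth_of _ _ _ HpE) as [P HP].
  destruct (smooth_of _ _ _ HqE) as [Q HQ].
  destruct (zo_F _ _ _ _ HP HpA) as [PA _].
  destruct (zo_F _ _ _ _ HQ HqA) as [QA _].
  pose proof (da_F _ _ _ _ _ HP HpD) as PD.
  pose proof (da_F _ _ _ _ _ HQ HqD) as QD.
  destruct (h_facts lam n' _ P g HpE HP Hg) as [HhE HhD].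
  set (f := lin (lin g (Copp (lam (S n'))) (p (S n'))) (Copp Defs.C1) (q n')).
  assert (Hf : f x = C0).
  { apply (ECT_zero lam n' a b f (S n') 0 HE').
    - unfold f. apply inE_lin; auto.
    - exists (fun j => lin (lin (P (S j)) (Copp (lam (S n'))) (P j)) (Copp Defs.C1) (Q j)).
      split. { unfold f. apply derseq_lin; auto. }
      intros j Hj. unfold lin.
      destruct (Nat.eq_dec j n') as [->|Hne].
      + rewrite PD, QD, (PA n') by lia. cz.
      + rewrite (PA j), (PA (S j)), (QA j) by lia. cz.
    - exists (fun j => lin (lin (P (S j)) (Copp (lam (S n'))) (P j)) (Copp Defs.C1) (Q j)).
      split. { unfold f. apply derseq_lin; auto. }
      intros j Hj. lia.
    - lia. }
  unfold f in Hf. cunf. injection Hf as A B.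
  rewrite (surjective_pairing (q n' x)). f_equal; lra.
Qed.

Theorem mainTheorem8 (lam : nat -> Cx) (n : nat) (a b : R)
  (p q : nat -> R -> Cx)
  (Hn : (1 <= n)%nat) (Hab : a <> b)
  (HE : ECT_ab lam n a b) (HE' : ECT_ab lam (n - 1) a b)
  (Hp : bernstein_basis lam n a b p) (Hq : bernstein_basis lam (n - 1) a b q) :
  exists d : nat -> Cx,
    (forall k, (k <= n - 1)%nat ->
       d k <> C0 /\
       forall g, is_deriv (p k) g -> Clim (fun x => Cdiv (g x) (q k x)) b (d k)) /\
    (forall k, (1 <= k <= n - 1)%nat -> forall g, is_deriv (p k) g ->
       forall x, Csub (g x) (Cmul (lam n) (p k x)) =
                 Cadd (q (k - 1)%nat x) (Cmul (d k) (q k x))) /\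
    (forall g, is_deriv (p 0%nat) g ->
       forall x, Csub (g x) (Cmul (lam n) (p 0%nat x)) = Cmul (d 0%nat) (q 0%nat x)) /\
    (forall g, is_deriv (p n) g ->
       forall x, Csub (g x) (Cmul (lam n) (p n x)) = q (n - 1)%nat x).
Proof.
  destruct n as [|n']; [lia|].
  replace (S n' - 1)%nat with n' in * by lia.
  assert (Hall : forall k, exists dk : Cx, (k <= n')%nat -> dk <> C0 /\
   (forall g, is_deriv (p k) g -> Clim (fun x => Cdiv (g x) (q k x)) b dk) /\
   ((1 <= k)%nat -> forall g, is_deriv (p k) g -> forall x,
      Csub (g x) (Cmul (lam (S n')) (p k x)) = Cadd (q (k-1)%nat x) (Cmul dk (q k x))) /\
   (k = 0%nat -> forall g, is_deriv (p k) g -> forall x,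
      Csub (g x) (Cmul (lam (S n')) (p k x)) = Cmul dk (q k x))).
  { intros k. destruct (le_lt_dec k n') as [Hk|Hk].
    - destruct (perk lam n' a b p q k HE' Hp Hq Hk) as [dk Hd]. exists dk. auto.
    - exists C0. intros; lia. }
  exists (fun k => proj1_sig (constructive_indefinite_description _ (Hall k))).
  split; [|split; [|split]].
  - intros k Hk. destruct (constructive_indefinite_description _ (Hall k)) as [dk Hd]. simpl.
    destruct (Hd Hk) as [H1 [H2 _]]. auto.
  - intros k Hk. destruct (constructive_indefinite_description _ (Hall k)) as [dk Hd]. simpl.
    destruct (Hd ltac:(lia)) as [_ [_ [H3 _]]]. apply H3. lia.
  - destruct (constructive_indefinite_description _ (Hall 0%nat)) as [dk Hd]. simpl.
    destruct (Hd ltac:(lia)) as [_ [_ [_ H4]]]. auto.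
  - apply (lastk lam n' a b p q HE' Hp Hq).
Qed.
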